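(* If $G$ and $H$ are infinite, connected, locally finite graphs, then $\beta(G\,\Box\, H)=\infty$.
   Context: The cartesian product $G\Box H$ has vertex set $V(G)\times V(H)$, where $(a,v)$ is adjacent to $(b,w)$ iff either $a=b$ and $vw\in E(H)$, or $v=w$ and $ab\in E(G)$. $d$ denotes shortest-path distance. A vertex $x$ resolves $u,v$ if $d(u,x)\ne d(v,x)$; a set of vertices is a resolving set if every pair of distinct vertices is resolved by some vertex of it. The metric dimension $\beta$ is the minimum cardinality of a resolving set if a finite one exists, and $\infty$ otherwise. *)

(* Defs.v *)
From Stdlib Require Import List Arith.
Import ListNotations.
Set Implicit Arguments.

Section Graphs.
Variable V : Type.
Variable adj : V -> V -> Prop.

Definition simple_graph : Prop :=
  (forall u v, adj u v -> adj v u) /\ (forall u, ~ adj u u).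

Inductive walk : nat -> V -> V -> Prop :=
| walk0 : forall u, walk 0 u u
| walkS : forall n u w v, adj u w -> walk n w v -> walk (S n) u v.

Definition dist (u v : V) (n : nat) : Prop :=
  walk n u v /\ forall m, walk m u v -> n <= m.

Definition connected : Prop := forall u v, exists n, walk n u v.

Definition locally_finite : Prop :=
  forall v, exists l : list V, forall w, adj v w -> In w l.

Definition infinite_graph : Prop := forall l : list V, exists v, ~ In v l.

Definition resolves (x u v : V) : Prop :=
  ~ (exists n, dist u x n /\ dist v x n).

Definition resolving_set (S : list V) : Prop :=
  forall u v, u <> v -> exists x, In x S /\ resolves x u v.

Definition metric_dim_infinite : Prop :=
  forall S : list V, ~ resolving_set S.
End Graphs.

Definition box {V W : Type} (adjG : V -> V -> Prop) (adjH : W -> W -> Prop)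
  (p q : V * W) : Prop :=
  (fst p = fst q /\ adjH (snd p) (snd q)) \/ (snd p = snd q /\ adjG (fst p) (fst q)).

(* Main.v *)
Require Import Defs.
From Stdlib Require Import List Arith Lia Classical ClassicalEpsilon.
Import ListNotations.
Set Implicit Arguments.

Lemma walk_app {V : Type} (adj : V -> V -> Prop) n u w m v :
  walk adj n u w -> walk adj m w v -> walk adj (n + m) u v.
Proof.
  induction 1; intros; simpl; auto.
  eapply walkS; eauto.
Qed.

Lemma walk_snoc {V : Type} (adj : V -> V -> Prop) n u w v :
  walk adj n u w -> adj w v -> walk adj (S n) u v.
Proof.
  intros H1 H2. replace (S n) with (n + 1) by lia.
  eapply walk_app; eauto. eapply walkS; eauto. constructor.
Qed.

Lemma walk_rev {V : Type} (adj : V -> V -> Prop) (sym : forall u v, adj u v -> adj v u) n u v :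
  walk adj n u v -> walk adj n v u.
Proof.
  induction 1. constructor. eapply walk_snoc; eauto.
Qed.

Lemma walk_last {V : Type} (adj : V -> V -> Prop) n u v :
  walk adj (S n) u v -> exists w, walk adj n u w /\ adj w v.
Proof.
  revert u. induction n; intros u H; inversion H; subst.
  - inversion H2; subst. exists u. split; [constructor|auto].
  - destruct (IHn _ H2) as [w' [Hw1 Hw2]]. exists w'. split; auto. eapply walkS; eauto.
Qed.

Lemma walk0_eq {V : Type} (adj : V -> V -> Prop) u v : walk adj 0 u v -> u = v.
Proof. intro H; inversion H; auto. Qed.

Lemma min_exists (P : nat -> Prop) : (exists n, P n) -> exists n, P n /\ forall m, P m -> n <= m.
Proof.
  intros [n Hn]. revert Hn. induction n as [n IH] using lt_wf_ind. intros Hn.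
  destruct (classic (exists m, m < n /\ P m)) as [[m [Hm1 Hm2]]|Hno].
  - eapply IH; eauto.
  - exists n. split; auto. intros m Hm. destruct (le_lt_dec n m); auto.
    exfalso. apply Hno. eauto.
Qed.

Definition dd {V : Type} (adj : V -> V -> Prop) (u v : V) : nat :=
  epsilon (inhabits 0) (fun n => dist adj u v n).

Lemma dd_spec {V : Type} (adj : V -> V -> Prop) (conn : connected adj) u v :
  dist adj u v (dd adj u v).
Proof.
  unfold dd. apply epsilon_spec. apply min_exists. apply conn.
Qed.

Lemma dd_walk {V : Type} (adj : V -> V -> Prop) (conn : connected adj) u v :
  walk adj (dd adj u v) u v.
Proof. apply dd_spec; auto. Qed.

Lemma dd_le {V : Type} (adj : V -> V -> Prop) (conn : connected adj) u v n :
  walk adj n u v -> dd adj u v <= n.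
Proof. intro H. apply (dd_spec conn u v). auto. Qed.

Lemma dist_unique {V : Type} (adj : V -> V -> Prop) u v n m :
  dist adj u v n -> dist adj u v m -> n = m.
Proof. intros [H1 H2] [H3 H4]. specialize (H2 _ H3). specialize (H4 _ H1). lia. Qed.

Lemma dd_tri {V : Type} (adj : V -> V -> Prop) (conn : connected adj) u w v :
  dd adj u v <= dd adj u w + dd adj w v.
Proof.
  apply dd_le; auto. eapply walk_app; apply dd_walk; auto.
Qed.

Lemma dd_sym {V : Type} (adj : V -> V -> Prop) (sym : forall u v, adj u v -> adj v u)
  (conn : connected adj) u v : dd adj u v = dd adj v u.
Proof.
  apply Nat.le_antisymm; apply dd_le; auto; apply walk_rev; auto; apply dd_walk; auto.
Qed.

Lemma dd_adj {V : Type} (adj : V -> V -> Prop) (conn : connected adj) u w v :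
  adj u w -> dd adj u v <= S (dd adj w v).
Proof.
  intros H. apply dd_le; auto. eapply walkS; eauto. apply dd_walk; auto.
Qed.

Lemma nbhd_list {V : Type} (adj : V -> V -> Prop) (lf : locally_finite adj) (l : list V) :
  exists L, forall v w, In v l -> adj v w -> In w L.
Proof.
  induction l as [|a l IH].
  - exists []. intros v w [].
  - destruct IH as [L HL]. destruct (lf a) as [la Ha]. exists (la ++ L).
    intros v w [<-|Hv] Hvw; apply in_or_app; [left|right]; eauto.
Qed.

Lemma ball_finite {V : Type} (adj : V -> V -> Prop) (lf : locally_finite adj) x0 K :
  exists l, forall v n, n <= K -> walk adj n x0 v -> In v l.
Proof.
  induction K as [|K IH].
  - exists [x0]. intros v n Hn Hw. assert (n = 0) by lia. subst.
    apply walk0_eq in Hw. subst. left; auto.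
  - destruct IH as [l Hl]. destruct (nbhd_list lf l) as [L HL].
    exists (l ++ L). intros v n Hn Hw. apply in_or_app.
    destruct (le_lt_dec n K). left; eauto.
    assert (n = S K) by lia. subst. apply walk_last in Hw.
    destruct Hw as [w [Hw1 Hw2]]. right. eapply HL; eauto.
Qed.

Lemma far_vertex {V : Type} (adj : V -> V -> Prop) (inf : infinite_graph V)
  (conn : connected adj) (lf : locally_finite adj) x0 K :
  exists z, K < dd adj x0 z.
Proof.
  destruct (ball_finite lf x0 K) as [l Hl]. destruct (inf l) as [z Hz].
  exists z. destruct (le_lt_dec (dd adj x0 z) K); auto.
  exfalso. apply Hz. eapply Hl; eauto. apply dd_walk; auto.
Qed.

Fixpoint sumf {V : Type} (f : V -> nat) (l : list V) : nat :=
  match l with [] => 0 | x :: l => f x + sumf f l end.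

Lemma sumf_step {V : Type} (f g : V -> nat) (l : list V) :
  (forall x, In x l -> f x <= S (g x)) -> (exists x, In x l /\ f x <= g x) ->
  sumf f l + 1 <= sumf g l + length l.
Proof.
  induction l as [|a l IH]; simpl; intros H1 [x [Hx Hx2]]; [destruct Hx|].
  destruct Hx as [<-|Hx].
  - assert (sumf f l <= sumf g l + length l).
    { clear -H1. induction l as [|b l IHl]; simpl; auto.
      assert (f b <= S (g b)) by (apply H1; right; left; auto).
      assert (sumf f l <= sumf g l + length l).
      { apply IHl. intros y [<-|Hy]; apply H1; auto; right; right; auto. }
      lia. }
    lia.
  - assert (f a <= S (g a)) by (apply H1; left; auto).
    assert (sumf f l + 1 <= sumf g l + length l) by (apply IH; eauto).
    lia.
Qed.

Lemma sumf_lower {V : Type} (f : V -> nat) (l : list V) N :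
  (forall x, In x l -> N <= f x) -> N * length l <= sumf f l.
Proof.
  induction l as [|a l IH]; simpl; intros H. lia.
  assert (N <= f a) by auto. assert (N * length l <= sumf f l) by auto. nia.
Qed.

Lemma good_pair {V : Type} (adj : V -> V -> Prop) (sg : simple_graph adj)
  (inf : infinite_graph V) (conn : connected adj) (lf : locally_finite adj) (A : list V) :
  exists a1 a2, adj a1 a2 /\ forall x, In x A -> dd adj a1 x = S (dd adj a2 x).
Proof.
  destruct sg as [sym irr].
  destruct (inf []) as [x0 _].
  set (Phi := fun z => sumf (fun x => dd adj z x + dd adj x0 x) A).
  destruct (classic (exists a1 a2, adj a1 a2 /\ forall x, In x A -> dd adj a1 x = S (dd adj a2 x)))
    as [Hg|Hng]; auto. exfalso.
  assert (Key : forall N z, dd adj x0 z = N -> Phi z + N <= Phi x0 + N * length A).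
  { induction N as [|N IH]; intros z Hz.
    - assert (z = x0). { symmetry. apply (walk0_eq (adj:=adj)). rewrite <- Hz. apply dd_walk; auto. }
      subst. lia.
    - pose proof (dd_walk conn x0 z) as Hw. rewrite Hz in Hw. apply walk_last in Hw.
      destruct Hw as [w [Hw1 Hw2]].
      assert (Hdw : dd adj x0 w = N).
      { apply Nat.le_antisymm. apply dd_le; auto.
        assert (dd adj x0 z <= dd adj x0 w + dd adj w z) by (apply dd_tri; auto).
        assert (dd adj w z <= 1) by (apply dd_le; auto; eapply walkS; eauto; constructor).
        lia. }
      specialize (IH w Hdw).
      assert (Hs : Phi z + 1 <= Phi w + length A).
      { unfold Phi. apply sumf_step.
        - intros x _. pose proof (@dd_adj _ adj conn z w x (sym _ _ Hw2)). lia.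
        - apply NNPP. intro Hno. apply Hng. exists z, w. split; auto.
          intros x Hx. pose proof (@dd_adj _ adj conn z w x (sym _ _ Hw2)).
          destruct (Nat.eq_dec (dd adj z x) (S (dd adj w x))); auto.
          exfalso. apply Hno. exists x. split; auto. lia. }
      nia. }
  destruct (far_vertex inf conn lf x0 (Phi x0)) as [z Hz].
  specialize (Key _ z eq_refl).
  assert (dd adj x0 z * length A <= Phi z).
  { unfold Phi. apply sumf_lower. intros x _.
    pose proof (dd_tri conn x0 x z). rewrite (dd_sym sym conn x z) in H. lia. }
  nia.
Qed.

Lemma walk_box_l {V W : Type} (adjG : V -> V -> Prop) (adjH : W -> W -> Prop) n a x b :
  walk adjG n a x -> walk (box adjG adjH) n (a, b) (x, b).
Proof.
  induction 1. constructor. eapply walkS; eauto. right. simpl. auto.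
Qed.

Lemma walk_box_r {V W : Type} (adjG : V -> V -> Prop) (adjH : W -> W -> Prop) n a b y :
  walk adjH n b y -> walk (box adjG adjH) n (a, b) (a, y).
Proof.
  induction 1. constructor. eapply walkS; eauto. left. simpl. auto.
Qed.

Lemma walk_box_proj {V W : Type} (adjG : V -> V -> Prop) (adjH : W -> W -> Prop) n p q :
  walk (box adjG adjH) n p q ->
  exists m1 m2, m1 + m2 = n /\ walk adjG m1 (fst p) (fst q) /\ walk adjH m2 (snd p) (snd q).
Proof.
  induction 1.
  - exists 0, 0. repeat split; constructor.
  - destruct IHwalk as [m1 [m2 [Hm [H1 H2]]]].
    destruct H as [[He Ha]|[He Ha]].
    + exists m1, (S m2). rewrite He. repeat split; auto. lia. eapply walkS; eauto.
    + exists (S m1), m2. rewrite He. repeat split; auto. lia. eapply walkS; eauto.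
Qed.

Lemma dist_box {V W : Type} (adjG : V -> V -> Prop) (adjH : W -> W -> Prop)
  (cG : connected adjG) (cH : connected adjH) a b x y :
  dist (box adjG adjH) (a, b) (x, y) (dd adjG a x + dd adjH b y).
Proof.
  split.
  - eapply walk_app. apply walk_box_l, dd_walk; auto. apply walk_box_r, dd_walk; auto.
  - intros m Hm. apply walk_box_proj in Hm. destruct Hm as [m1 [m2 [Hm [H1 H2]]]].
    simpl in *. apply (dd_le cG) in H1. apply (dd_le cH) in H2. lia.
Qed.

Theorem corollary2 (V W : Type) (adjG : V -> V -> Prop) (adjH : W -> W -> Prop) :
  simple_graph adjG -> simple_graph adjH ->
  infinite_graph V -> infinite_graph W ->
  connected adjG -> connected adjH ->
  locally_finite adjG -> locally_finite adjH ->
  metric_dim_infinite (box adjG adjH).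
Proof.
  intros sG sH iG iH cG cH lG lH Sl HS.
  destruct (good_pair sG iG cG lG (map fst Sl)) as [a1 [a2 [Ha Ha']]].
  destruct (good_pair sH iH cH lH (map snd Sl)) as [b1 [b2 [Hb Hb']]].
  destruct (HS (a1, b2) (a2, b1)) as [[x y] [Hin Hres]].
  - intro E. inversion E; subst. destruct sG as [_ irr]. eapply irr; eauto.
  - apply Hres. exists (dd adjG a1 x + dd adjH b2 y). split.
    + apply dist_box; auto.
    + rewrite (Ha' x) by (apply (in_map fst) in Hin; auto).
      replace (S (dd adjG a2 x) + dd adjH b2 y) with (dd adjG a2 x + S (dd adjH b2 y)) by lia.
      rewrite <- (Hb' y) by (apply (in_map snd) in Hin; auto).
      apply dist_box; auto.
Qed.
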